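(* Let $n\ge1$, $0\le\epsilon<\tfrac12$, $t\ge 1$ an integer, and let $f:\{0,1\}^n\to\{0,1\}$ be $\epsilon$-far from the set $A_n$ of $n$-variable affine functions. Let $a^{(0)},a^{(1)},\dots,a^{(t)}$ be independent random elements of $\{0,1\}^n$, each distributed according to $\Pr[a^{(i)}=z]=NW_f(z)^2$ (the outcome distribution of measuring $\mathcal{D}_f|0\rangle^{\otimes n}$ in the computational basis). Then $$\Pr\big[a^{(i)}=a^{(0)}\text{ for all }i=1,\dots,t\big]\le(1-2\epsilon)^t.$$ Consequently, the procedure that reports ''$f$ is not affine'' iff some $a^{(i)}\ne a^{(0)}$ errs on such $f$ with probability at most $(1-2\epsilon)^t$, and always answers correctly when $f$ is affine.
   Context: For $x,a\in\{0,1\}^n$, $a\cdot x=a_1x_1\oplus\cdots\oplus a_nx_n$. The set $A_n$ of affine functions consists of all functions $x\mapsto a_0\oplus a\cdot x$ with $a_0\in\{0,1\}$, $a\in\{0,1\}^n$. The normalized Walsh transform is $NW_f(\omega)=2^{-n}\sum_{x}(-1)^{f(x)\oplus\omega\cdot x}$, and $\sum_\omega NW_f(\omega)^2=1$. With $U_f|x\rangle=(-1)^{f(x)}|x\rangle$ and $H$ the Hadamard gate, $\mathcal{D}_f=H^{\otimes n}U_fH^{\otimes n}$ satisfies $\mathcal{D}_f|0\rangle^{\otimes n}=\sum_z NW_f(z)|z\rangle$. $f$ is $\epsilon$-far from $A_n$ if $|\{x:f(x)\ne g(x)\}|\ge\epsilon2^n$ for every $g\in A_n$. *)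

(* Defs.v *)
From HB Require Import structures.
From mathcomp Require Import all_boot all_order all_algebra.
Set Implicit Arguments. Unset Strict Implicit. Unset Printing Implicit Defensive.
Import Order.TTheory GRing.Theory Num.Theory.
Local Open Scope ring_scope.

Definition BV (n : nat) := {ffun 'I_n -> bool}.

Definition dotb (n : nat) (a x : BV n) : bool :=
  \big[addb/false]_(i < n) (a i && x i).

Definition affine_fun (n : nat) (a0 : bool) (a : BV n) : BV n -> bool :=
  fun x => addb a0 (dotb a x).

Definition NW (R : realFieldType) (n : nat) (f : BV n -> bool) (w : BV n) : R :=
  (2%:R ^+ n)^-1 * \sum_(x : BV n) (-1) ^+ (addb (f x) (dotb w x)).

Definition eps_far (R : realFieldType) (n : nat) (f : BV n -> bool) (eps : R) : Prop :=
  forall (a0 : bool) (a : BV n),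
    eps * 2%:R ^+ n <= (#|[set x : BV n | f x != affine_fun a0 a x]|)%:R.

(* Probability that a^(1),...,a^(t) all equal a^(0), where a^(0..t) are
   independent with Pr[a^(i) = z] = NW_f(z)^2: sum over all outcome tuples
   s : 'I_(t+1) -> {0,1}^n with all entries equal of the product probability. *)
Definition prob_all_equal (R : realFieldType) (n : nat) (f : BV n -> bool) (t : nat) : R :=
  \sum_(s : {ffun 'I_t.+1 -> BV n} | [forall i : 'I_t.+1, s i == s ord0])
     \prod_(i < t.+1) (NW R f (s i)) ^+ 2.

(* Main.v *)
Require Import Defs.
From HB Require Import structures.
From mathcomp Require Import all_boot all_order all_algebra.
From mathcomp Require Import ring lra.
Import Order.TTheory GRing.Theory Num.Theory.
Local Open Scope ring_scope.
Set Implicit Arguments. Unset Strict Implicit.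

Definition bxor n (u v : BV n) : BV n := [ffun i => u i (+) v i].

Lemma dotb_xorl n (u v x : BV n) : dotb (bxor u v) x = dotb u x (+) dotb v x.
Proof.
rewrite /dotb -big_split /=; apply: eq_bigr => i _; rewrite ffunE.
by case: (u i) (v i) (x i) => [] [] [].
Qed.

Lemma dotb_sym n (u x : BV n) : dotb u x = dotb x u.
Proof. by apply: eq_bigr => i _; rewrite andbC. Qed.

Lemma card_BV n : #|{: BV n}| = (2 ^ n)%N.
Proof. by rewrite card_ffun card_bool card_ord. Qed.

Definition chi (R : realFieldType) n (w x : BV n) : R := (-1) ^+ dotb w x.

Lemma chiM (R : realFieldType) n (w z x : BV n) :
  chi R w x * chi R z x = chi R (bxor w z) x.
Proof. by rewrite /chi dotb_xorl signr_addb. Qed.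

Lemma sum_chi_nz (R : realFieldType) n (v : BV n) :
  v != [ffun=> false] -> \sum_(x : BV n) chi R v x = 0.
Proof.
move=> hv.
have [i vi] : exists i, v i.
  apply/existsP; apply: contraR hv; rewrite negb_exists => /forallP h.
  by apply/eqP/ffunP => j; rewrite ffunE; apply/negbTE/h.
pose e : BV n := [ffun j => j == i].
have de : dotb v e = true.
  rewrite /dotb (bigD1 i) //= ffunE eqxx vi /= big1 // => j /negbTE hj.
  by rewrite ffunE hj andbF.
have inj : injective (fun x => bxor x e).
  move=> x y /ffunP h; apply/ffunP => j; move: (h j); rewrite !ffunE.
  by move=> /(congr1 (addb^~ (j == i))); rewrite -!addbA addbb !addbF.
have := reindex_inj inj (F := fun x => chi R v x) (P := xpredT) (op := +%R) (x := 0).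
rewrite /= => H.
have : \sum_(x : BV n) chi R v x = - \sum_(x : BV n) chi R v x.
  rewrite {1}H -sumrN. apply: eq_bigr => x _.
  by rewrite /chi dotb_sym dotb_xorl (dotb_sym e) de signr_addb expr1 mulrN1 (dotb_sym x).
lra.
Qed.

Lemma sum_chi0 (R : realFieldType) n :
  \sum_(x : BV n) chi R [ffun=> false] x = (2 ^ n)%:R.
Proof.
rewrite (eq_bigr (fun _ => 1)); last first.
  move=> x _; rewrite /chi /dotb big1 // => i _; by rewrite ffunE.
by rewrite sumr_const card_BV.
Qed.

Lemma orth (R : realFieldType) n (w z : BV n) :
  \sum_(x : BV n) chi R w x * chi R z x = if w == z then (2 ^ n)%:R else 0.
Proof.
under eq_bigr do rewrite chiM.
case: eqP => [->|hne].
  have -> : bxor z z = [ffun=> false] by apply/ffunP => i; rewrite !ffunE addbb.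
  exact: sum_chi0.
apply: sum_chi_nz; apply/eqP => h; apply: hne; apply/ffunP => i.
by move/ffunP: h => /(_ i); rewrite !ffunE; case: (w i) (z i) => [] [].
Qed.

Lemma NWE (R : realFieldType) n (f : BV n -> bool) w :
  NW R f w = (2%:R ^+ n)^-1 * \sum_(x : BV n) (-1) ^+ f x * chi R w x.
Proof. by rewrite /NW; congr (_ * _); apply: eq_bigr => x _; rewrite signr_addb. Qed.

Lemma pow2_gt0 (R : realFieldType) n : 0 < (2%:R : R) ^+ n.
Proof. by apply: exprn_gt0; rewrite ltr0n. Qed.

Lemma parseval_gen (R : realFieldType) n (s : BV n -> R) :
  \sum_(w : BV n) (\sum_(x : BV n) s x * chi R w x) ^+ 2 =
  (2 ^ n)%:R * \sum_(x : BV n) s x ^+ 2.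
Proof.
under eq_bigr do rewrite expr2 mulr_suml; under eq_bigr do under eq_bigr do rewrite mulr_sumr.
rewrite exchange_big /= mulr_sumr; apply: eq_bigr => x _.
rewrite exchange_big /= (bigD1 x) //= [X in _ + X]big1 ?addr0; last first.
  move=> y hy.
  under eq_bigr do rewrite mulrACA.
  rewrite -mulr_sumr.
  under eq_bigr do rewrite /chi (dotb_sym _ x) (dotb_sym _ y).
  by rewrite (orth R x y) eq_sym (negbTE hy) mulr0.
under eq_bigr do rewrite mulrACA.
rewrite -mulr_sumr.
under eq_bigr do rewrite /chi (dotb_sym _ x).
by rewrite (orth R x x) eqxx expr2 mulrC.
Qed.

Lemma parseval (R : realFieldType) n (f : BV n -> bool) :
  \sum_(w : BV n) NW R f w ^+ 2 = 1.
Proof.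
under eq_bigr do rewrite NWE exprMn.
rewrite -mulr_sumr parseval_gen.
rewrite (eq_bigr (fun _ => 1)); last by move=> x _; rewrite -signr_odd ?sqrr_sign // expr2 -signr_addb addbb.
rewrite sumr_const card_BV -natrX.
have h : (2 ^ n)%:R != 0 :> R by rewrite pnatr_eq0 expn_eq0.
by rewrite expr2 mulrACA mulVf // mulr1.
Qed.

Lemma sum_sign_card (R : realFieldType) n (b : BV n -> bool) :
  \sum_(x : BV n) ((-1) ^+ b x : R) = (2 ^ n)%:R - 2%:R * #|[set x | b x]|%:R.
Proof.
have -> : \sum_(x : BV n) ((-1) ^+ b x : R) = \sum_(x : BV n) (1 - 2%:R * (nat_of_bool (b x))%:R).
  by apply: eq_bigr => x _; case: (b x) => /=; rewrite ?mulr0 ?mulr1 ?subr0 //; lra.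
rewrite sumrB sumr_const card_BV -mulr_sumr -natr_sum; congr (_ - _ * _%:R).
rewrite cardsE -sum1_card [RHS]big_mkcond /=; apply: eq_bigr => x _; rewrite unfold_in; by case: (b x).
Qed.

Lemma NW_bound (R : realFieldType) n (eps : R) (f : BV n -> bool) (hfar : eps_far f eps) w :
  NW R f w ^+ 2 <= (1 - 2%:R * eps) ^+ 2.
Proof.
set N : R := 2%:R ^+ n.
have hN : 0 < N by exact: pow2_gt0.
set d := #|[set x | f x (+) dotb w x]|.
have h1 := hfar false w.
have h2 := hfar true w.
have e1 : [set x | f x != affine_fun false w x] = [set x | f x (+) dotb w x].
  by apply/setP => x; rewrite !inE /affine_fun; case: (f x) (dotb w x) => [] [].
have e2 : [set x | f x != affine_fun true w x] = ~: [set x | f x (+) dotb w x].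
  by apply/setP => x; rewrite !inE /affine_fun; case: (f x) (dotb w x) => [] [].
rewrite e1 -/d in h1.
rewrite e2 in h2.
have hc := cardsC [set x | f x (+) dotb w x].
rewrite card_BV -/d in hc.
have hc' : (#|~: [set x | f x (+) dotb w x]|%:R : R) = N - d%:R.
  by rewrite /N -natrX -hc natrD addrAC subrr add0r.
rewrite hc' in h2. rewrite -/N in h1 h2.
have hx : NW R f w * N = N - 2%:R * d%:R.
  rewrite /NW sum_sign_card mulrAC mulVf ?gt_eqF // mul1r natrX //.
have hlo : -(1 - 2%:R * eps) <= NW R f w.
  rewrite -(ler_pM2r hN) hx; lra.
have hhi : NW R f w <= 1 - 2%:R * eps.
  rewrite -(ler_pM2r hN) hx; lra.
nra.
Qed.

Lemma prob_eq (R : realFieldType) n (f : BV n -> bool) t :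
  prob_all_equal R f t = \sum_(z : BV n) (NW R f z ^+ 2) ^+ t.+1.
Proof.
rewrite /prob_all_equal (partition_big (fun s : {ffun 'I_t.+1 -> BV n} => s ord0) xpredT) //=.
apply: eq_bigr => z _.
rewrite (big_pred1 [ffun=> z]); last first.
  move=> s /=; apply/idP/eqP.
    case/andP => /forallP h /eqP h0; apply/ffunP => i; rewrite ffunE -h0; exact/eqP/h.
  by move=> ->; rewrite ffunE eqxx andbT; apply/forallP => i; rewrite !ffunE.
under eq_bigr do rewrite ffunE.
by rewrite prodr_const card_ord.
Qed.

Lemma NW_affine (R : realFieldType) n a0 (a z : BV n) :
  NW R (affine_fun a0 a) z ^+ 2 = if a == z then 1 else 0.
Proof.
rewrite NWE.
under eq_bigr do rewrite /affine_fun signr_addb -/(chi R a _) -mulrA.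
rewrite -mulr_sumr orth.
have h : (2 ^ n)%:R != 0 :> R by rewrite pnatr_eq0 expn_eq0.
case: eqP => _; last by rewrite mulr0 mulr0 expr0n.
by rewrite natrX in h *; rewrite mulrCA mulVf // mulr1 sqrr_sign.
Qed.

Theorem mainTheorem4 (R : realFieldType) (n : nat) (eps : R) (t : nat)
  (f : BV n -> bool)
  (hn : (1 <= n)%N) (heps0 : 0 <= eps) (heps1 : eps < 2%:R^-1) (ht : (1 <= t)%N)
  (hfar : eps_far f eps) :
  prob_all_equal R f t <= (1 - 2%:R * eps) ^+ t /\
  (* the test "report not affine iff some a^(i) <> a^(0)" never errs on affine g *)
  (forall (a0 : bool) (a : BV n), prob_all_equal R (affine_fun a0 a) t = 1).
Proof.
split; last first.
  move=> a0 a; rewrite prob_eq.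
  under eq_bigr do rewrite NW_affine.
  rewrite (bigD1 a) //= eqxx expr1n big1 ?addr0 // => z hz.
  by rewrite eq_sym (negbTE hz) expr0n.
set q := 1 - 2%:R * eps.
have hq0 : 0 <= q by rewrite /q; lra.
have hq1 : q <= 1 by rewrite /q; lra.
rewrite prob_eq.
apply: (@le_trans _ _ (\sum_(z : BV n) NW R f z ^+ 2 * (q ^+ 2) ^+ t)).
  apply: ler_sum => z _; rewrite exprS; apply: ler_wpM2l; first exact: sqr_ge0.
  by apply: lerXn2r; rewrite ?nnegrE ?sqr_ge0 ?exprn_ge0 //; apply: NW_bound.
rewrite -mulr_suml parseval mul1r.
apply: lerXn2r; rewrite ?nnegrE ?exprn_ge0 //.
by rewrite expr2 ler_piMr.
Qed.
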